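(* For every positive integer $n$, $$\sum_{j=1}^{n-1}\csc^6\left(\frac{j\pi}{2n}\right) = \frac{8(n+1)(n-1)(8n^4+29n^2+71)}{945}.$$
   Context: Empty sums are equal to $0$. *)

(* Defs.v *)
From Stdlib Require Import Reals List.
Open Scope R_scope.

Definition csc (x : R) : R := / sin x.

(* sum_{j=m}^{m+k-1} f j ; empty sum is 0 *)
Definition sum_range (m k : nat) (f : nat -> R) : R :=
  fold_right Rplus 0 (map f (seq m k)).

(* Main.v *)
Require Import Defs.
From Stdlib Require Import Reals List Lra Lia.
Open Scope R_scope.

Lemma ang_bounds n j : (1 <= j)%nat -> (j < n)%nat ->
  0 < INR j * PI / (2 * INR n) < PI / 2.
Proof.
intros hj hjn.
assert (hn : 0 < INR n) by (apply lt_0_INR; lia).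
assert (hj1 : 1 <= INR j) by (apply (le_INR 1); lia).
assert (hjn' : INR j < INR n) by (apply lt_INR; lia).
assert (hpi := PI_RGT_0).
set (r := INR j / INR n).
assert (e : INR j * PI / (2 * INR n) = r * (PI / 2)) by (unfold r; field; lra).
assert (hr : r * INR n = INR j) by (unfold r; field; lra).
assert (r0 : 0 < r) by (unfold r; apply Rdiv_lt_0_compat; lra).
assert (r1 : r < 1) by nra.
rewrite e; split; nra.
Qed.

Lemma ang_double n j : (1 <= n)%nat -> 2 * INR n * (INR j * PI / (2 * INR n)) = INR j * PI.
Proof.
intros hn. assert (0 < INR n) by (apply lt_0_INR; lia). field. lra.
Qed.

Lemma sin_jpi j : sin (INR j * PI) = 0.
Proof. apply sin_eq_0_1. exists (Z.of_nat j). now rewrite INR_IZR_INZ. Qed.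

Lemma sin_pos n j : (1 <= j)%nat -> (j < n)%nat -> 0 < sin (INR j * PI / (2 * INR n)).
Proof. intros a b. destruct (ang_bounds n j a b). apply sin_gt_0; lra. Qed.

Lemma cos_pos n j : (1 <= j)%nat -> (j < n)%nat -> 0 < cos (INR j * PI / (2 * INR n)).
Proof. intros a b. destruct (ang_bounds n j a b). apply cos_gt_0; lra. Qed.

Lemma sin_lt_ang n j k : (1 <= j)%nat -> (j < k)%nat -> (k < n)%nat ->
  sin (INR j * PI / (2 * INR n)) < sin (INR k * PI / (2 * INR n)).
Proof.
intros a b c.
destruct (ang_bounds n j a ltac:(lia)). destruct (ang_bounds n k ltac:(lia) c).
apply sin_increasing_1; try lra.
assert (hn : 0 < INR n) by (apply lt_0_INR; lia).
assert (INR j < INR k) by (apply lt_INR; lia).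
unfold Rdiv. apply Rmult_lt_compat_r.
- apply Rinv_0_lt_compat; lra.
- apply Rmult_lt_compat_r; [apply PI_RGT_0 | lra].
Qed.

Lemma sin_sq_inj n j k : (1 <= j)%nat -> (j < n)%nat -> (1 <= k)%nat -> (k < n)%nat ->
  sin (INR j * PI / (2 * INR n)) ^ 2 = sin (INR k * PI / (2 * INR n)) ^ 2 -> j = k.
Proof.
intros a b c d e.
assert (sj := sin_pos n j a b). assert (sk := sin_pos n k c d).
destruct (Nat.lt_trichotomy j k) as [h|[h|h]]; auto.
- assert (l := sin_lt_ang n j k a h d). exfalso. nra.
- assert (l := sin_lt_ang n k j c h b). exfalso. nra.
Qed.

Module M.
From mathcomp Require Import all_boot all_algebra.
From mathcomp Require Import Rstruct.
From mathcomp Require Import ring lra zify.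
Import GRing.Theory Num.Theory.
Local Open Scope ring_scope.

Fixpoint AB (n : nat) : {poly R} * {poly R} :=
  match n with
  | 0%N => (1, 0)
  | m.+1 => let (a, b) := AB m in
      (a - (a * 'X) *+ 2 - (b * 'X) *+ 2 + (b * 'X * 'X) *+ 2,
       a *+ 2 + b - (b * 'X) *+ 2)
  end.
Definition A n := (AB n).1.
Definition B n := (AB n).2.
Lemma A_S n : A n.+1 = A n - (A n * 'X) *+ 2 - (B n * 'X) *+ 2 + (B n * 'X * 'X) *+ 2.
Proof. rewrite /A /B /=; by case: (AB n). Qed.
Lemma B_S n : B n.+1 = A n *+ 2 + B n - (B n * 'X) *+ 2.
Proof. rewrite /A /B /=; by case: (AB n). Qed.

Lemma coefAB n : let x : R := n%:R in
  [/\ (A n)`_0 = 1, (A n)`_1 = -2 * x^+2, (A n)`_2 = 2/3 * (x^+4 - x^+2) &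
      (A n)`_3 = -(4/45) * x^+6 + 4/9 * x^+4 - 16/45 * x^+2 ] /\
  [/\ (B n)`_0 = 2 * x, (B n)`_1 = 4/3 * (x - x^+3),
      (B n)`_2 = 4/15 * x^+5 - 4/3 * x^+3 + 16/15 * x &
      (B n)`_3 = -(8/315) * x^+7 + 16/45 * x^+5 - 56/45 * x^+3 + 32/35 * x].
Proof.
elim: n => [|n [[a0 a1 a2 a3] [b0 b1 b2 b3]]] /=.
  rewrite /A /B /= ?coef1 ?coef0 /=. by split; split; ring.
rewrite A_S B_S !(coefD, coefB, coefN, coefMNn, coefMn, coefMX) /=.
rewrite a0 a1 a2 a3 b0 b1 b2 b3 -natr1.
by split; split; field.
Qed.

Lemma eq_mod (x y k d : R) : d = 0 -> x - y = k * d -> x = y.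
Proof. by move=> -> /eqP; rewrite mulr0 subr_eq0 => /eqP. Qed.

Lemma trigAB n t : (A n).[sin t ^+ 2] = cos (2 * INR n * t) /\
   sin t * cos t * (B n).[sin t ^+ 2] = sin (2 * INR n * t).
Proof.
elim: n => [|n [IHa IHb]].
  by rewrite /A /B /= !hornerE cos_0 sin_0.
have e : Rmult (Rmult 2 (INR n.+1)) t = Rplus (Rmult (Rmult 2 (INR n)) t) (Rmult 2 t).
  by rewrite S_INR !RealsE; ring.
rewrite e.
have hc : cos t ^+ 2 = 1 - sin t ^+ 2.
  have h := sin2_cos2 t. rewrite /Rsqr !RealsE in h.
pose d := sin t * sin t + cos t * cos t - 1. pose k : R := 1.
  apply: (eq_mod _ _ k d); rewrite /d /k; [by rewrite h subrr | rewrite R1E; ring].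
rewrite cos_plus sin_plus -IHa -IHb sin_2a cos_2a_sin ?RealsE /= A_S B_S !(hornerD, hornerN, hornerMn, hornerMX).
split; last by ring.
pose k := 2 * sin t ^+ 2 * (B n).[sin t ^+ 2]. pose d := cos t ^+ 2 - (1 - sin t ^+ 2).
apply: (eq_mod _ _ k d); rewrite /k /d.
  by rewrite hc subrr.
ring.
Qed.

Lemma sizeAB n : (size (A n) <= n.+1)%N /\ (size (B n) <= n)%N.
Proof.
elim: n => [|n [/leq_sizeP ha /leq_sizeP hb]].
  by rewrite /A /B /= size_poly1 size_poly0.
split; apply/leq_sizeP => j hj.
  rewrite A_S !(coefD, coefB, coefN, coefMNn, coefMn, coefMX).
  case: j hj => [|[|j]] //= hj.
  rewrite !ha; try lia. rewrite !hb; try lia. ring.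
rewrite B_S !(coefD, coefB, coefN, coefMNn, coefMn, coefMX).
case: j hj => [|j] //= hj.
have h1 := ha j.+1 hj. have h2 := hb j.+1 (ltnW hj). have h3 : (B n)`_j = 0 by apply: hb; lia.
rewrite h1 h2 h3. ring.
Qed.

Definition Pr (rs : seq R) : {poly R} := \prod_(w <- rs) ('X - w%:P).
Definition Pp (rs : seq R) : R := \prod_(w <- rs) (- w).
Definition Ss (rs : seq R) (k : nat) : R := \sum_(w <- rs) w^-1 ^+ k.

Lemma prod_coef (rs : seq R) : all (fun w => w != 0) rs ->
 [/\ (Pr rs)`_0 = Pp rs, (Pr rs)`_1 = - Pp rs * Ss rs 1%N,
     (Pr rs)`_2 = Pp rs * (Ss rs 1%N ^+ 2 - Ss rs 2%N) / 2
   & (Pr rs)`_3 = - Pp rs * (Ss rs 1%N ^+ 3 - 3 * Ss rs 1%N * Ss rs 2%N + 2 * Ss rs 3%N) / 6].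
Proof.
rewrite /Pr /Pp /Ss.
elim: rs => [|a rs IH] /=.
  rewrite !big_nil !coef1 /=. split; ring.
case/andP=> ha /IH [h0 h1 h2 h3].
rewrite !big_cons mulrBl !(coefB, coefXM, coefCM) /= h0 h1 h2 h3.
by split; field.
Qed.

Lemma sum_rangeE m k f : sum_range m k f = \sum_(j <- iota m k) f j.
Proof.
elim: k m => [|k IH] m; first by rewrite big_nil.
by rewrite big_cons -IH.
Qed.

Lemma newton3 (D s1 s2 s3 c1 c2 c3 : R) : D != 0 ->
  c1 = - D * s1 -> c2 = D * (s1 ^+ 2 - s2) / 2 ->
  c3 = - D * (s1 ^+ 3 - 3 * s1 * s2 + 2 * s3) / 6 ->
  s3 = (- 6 * c3 / D - (- c1 / D) ^+ 3 + 3 * (- c1 / D) * ((- c1 / D) ^+ 2 - 2 * c2 / D)) / 2.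
Proof. move=> hD -> -> ->. by field. Qed.

Lemma main_sum n : (1 <= n)%N ->
  \sum_(j <- iota 1 (n - 1)) ((sin (INR j * PI / (2 * INR n)) ^+ 2)^-1) ^+ 3
  = 8 * (n%:R + 1) * (n%:R - 1) * (8 * n%:R ^+ 4 + 29 * n%:R ^+ 2 + 71) / 945.
Proof.
move=> hn.
pose rs := [seq sin (INR j * PI / (2 * INR n)) ^+ 2 | j <- iota 1 (n - 1)].
have memj j : j \in iota 1 (n - 1) -> (1 <= j)%coq_nat /\ (j < n)%coq_nat.
  rewrite mem_iota => /andP [h1 h2]; split; apply/leP; lia.
have hroot : all (root (B n)) rs.
  apply/allP => w /mapP [j /memj [h1 h2] ->].
  have [_ hb] := trigAB n (INR j * PI / (2 * INR n)).
  rewrite ang_double in hb; last by apply/leP.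
  rewrite sin_jpi in hb.
  have sp := sin_pos n j h1 h2. have cp := cos_pos n j h1 h2.
  move/eqP: hb; rewrite R0E !mulf_eq0 => /orP [/orP [/eqP hs | /eqP hc] | //].
    by rewrite hs in sp; case: (Rlt_irrefl _ sp).
  by rewrite hc in cp; case: (Rlt_irrefl _ cp).
have huniq : uniq_roots rs.
  rewrite uniq_rootsE map_inj_in_uniq ?iota_uniq //.
  move=> j k /memj [h1 h2] /memj [h3 h4] heq.
  apply: (sin_sq_inj n j k h1 h2 h3 h4). by rewrite !RpowE.
have hnz : all (fun w => w != 0) rs.
  apply/allP => w /mapP [j /memj [h1 h2] ->].
  rewrite expf_eq0 /=. apply/eqP => hs.
  have sp := sin_pos n j h1 h2. rewrite hs in sp. by case: (Rlt_irrefl _ sp).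
have [q hq] := uniq_roots_prod_XsubC hroot huniq.
have [[a0 a1 a2 a3] [b0 b1 b2 b3]] := coefAB n.
have [_ hsz] := sizeAB n.
have hx : (n%:R : R) != 0 by rewrite pnatr_eq0 -lt0n.
have Bnz : B n != 0.
  apply/eqP => h. move: b0. rewrite h coef0 => /eqP. rewrite eq_sym mulf_eq0 => /orP [] /eqP.
    move/eqP. by rewrite pnatr_eq0.
  by move/eqP; rewrite (negbTE hx).
have qnz : q != 0 by apply/eqP => h; move: Bnz; rewrite hq h mul0r eqxx.
have Pnz : \prod_(z <- rs) ('X - z%:P) != 0 :> {poly R}.
  by rewrite -size_poly_eq0 size_prod_XsubC.
have hq1 : (size q <= 1)%N.
  move: hsz. rewrite hq size_mul // size_prod_XsubC size_map size_iota addnS /= => h.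
  rewrite -(leq_add2r (n - 1)); apply: (leq_trans h). by rewrite add1n subn1 prednK.
rewrite (size1_polyC hq1) in hq.
have [p0 p1 p2 p3] := prod_coef rs hnz.
have hB k : (B n)`_k = q`_0 * (Pr rs)`_k by rewrite hq coefCM.
have hD : q`_0 * Pp rs = 2 * n%:R by rewrite -b0 hB p0.
have hD0 : q`_0 * Pp rs != 0 by rewrite hD mulf_eq0 negb_or hx andbT pnatr_eq0.
have e1 : (B n)`_1 = - (q`_0 * Pp rs) * Ss rs 1%N by rewrite hB p1; ring.
have e2 : (B n)`_2 = (q`_0 * Pp rs) * (Ss rs 1%N ^+ 2 - Ss rs 2%N) / 2 by rewrite hB p2; ring.
have e3 : (B n)`_3 = - (q`_0 * Pp rs) * (Ss rs 1%N ^+ 3 - 3 * Ss rs 1%N * Ss rs 2%N + 2 * Ss rs 3%N) / 6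
  by rewrite hB p3; ring.
have := newton3 _ _ _ _ _ _ _ hD0 e1 e2 e3.
rewrite hD b1 b2 b3 => hS3.
have -> : \sum_(j <- iota 1 (n - 1)) ((sin (INR j * PI / (2 * INR n)) ^+ 2)^-1) ^+ 3 = Ss rs 3%N
  by rewrite /Ss /rs big_map.
rewrite hS3. field. by rewrite hx.
Qed.

Open Scope R_scope.
Lemma final (n : nat) (hn : Peano.le 1 n) :
  sum_range 1 (Nat.sub n 1) (fun j => (csc (INR j * PI / (2 * INR n))) ^ 6)
  = 8 * (INR n + 1) * (INR n - 1) * (8 * INR n ^ 4 + 29 * INR n ^ 2 + 71) / 945.
Proof.
rewrite sum_rangeE (@eq_bigr _ _ _ _ _ _ _ (fun j => ((sin (INR j * PI / (2 * INR n)) ^+ 2)^-1) ^+ 3)); last first.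
  move=> j _. by rewrite /csc RpowE RinvE -exprVn -exprM.
rewrite main_sum; last by apply/leP.
rewrite !RealsE /=. by [].
Qed.
End M.

Theorem mainTheorem18 (n : nat) (hn : (1 <= n)%nat) :
  sum_range 1 (n - 1) (fun j => (csc (INR j * PI / (2 * INR n))) ^ 6)
  = 8 * (INR n + 1) * (INR n - 1) * (8 * INR n ^ 4 + 29 * INR n ^ 2 + 71) / 945.
Proof. exact (M.final n hn). Qed.
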